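(* Let $(X,\Sigma)$ be a locally finite test space and let $\mathrm{Pl}:E(X,\Sigma)\to D$ be a plausibility measure on it. If $\mathrm{Pl}$ is Archimedean, then $\mathrm{Pl}$ almost agrees with some probability measure $\mu$ on $(X,\Sigma)$. That is, there is a probability measure $\mu$ such that for all events $A,B$, $\mathrm{Pl}(A)\preceq\mathrm{Pl}(B)$ implies $\mu(A)\le\mu(B)$.
   Context: A test space $(X,\Sigma)$ is a set $X$ of outcomes together with a set $\Sigma\subseteq 2^X$ of subsets (called tests) with $\bigcup_{T\in\Sigma}T=X$. It is locally finite if every test is a finite set. An event is a subset of $X$ that is contained in some test, and $E(X,\Sigma)$ denotes the set of all events. A probability measure on $(X,\Sigma)$ is a function $\mu:X\to\mathbb{R}_{\ge0}$ with $\sum_{x\in T}\mu(x)=1$ for every $T\in\Sigma$. It is extended to events by $\mu(A)=\sum_{x\in A}\mu(x)$. A plausibility measure is a function $\mathrm{Pl}:E(X,\Sigma)\to D$, where $(D,\preceq)$ is a partially ordered set, satisfying three conditions: (i) $\mathrm{Pl}(T)=\mathrm{Pl}(R)$ for all $T,R\in\Sigma$; (ii) $A\subseteq B$ implies $\mathrm{Pl}(A)\preceq\mathrm{Pl}(B)$; (iii) $\mathrm{Pl}(\emptyset)\prec\mathrm{Pl}(T)$ for every $T\in\Sigma$. Here $a\prec b$ means $a\preceq b$ and $b\not\preceq a$. $\mathrm{Pl}$ is Archimedean if the following holds for every $n\ge1$ and every pair of finite families of events $(A_1,\dots,A_n)$ and $(B_1,\dots,B_n)$ such that each outcome $x\in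 X$ belongs to the same number of the $A_i$ as of the $B_i$ (counted with multiplicity): whenever $\mathrm{Pl}(A_i)\preceq\mathrm{Pl}(B_i)$ for all $i=1,\dots,n-1$, then $\mathrm{Pl}(A_n)\succeq\mathrm{Pl}(B_n)$. *)

(* Defs.v *)
From Stdlib Require Import Reals List Arith Classical ClassicalEpsilon.
Open Scope R_scope.

Definition set (X : Type) := X -> Prop.
Definition emptyset {X : Type} : set X := fun _ => False.
Definition subset {X : Type} (A B : set X) : Prop := forall x, A x -> B x.

Definition enumerates {X : Type} (l : list X) (A : set X) : Prop :=
  NoDup l /\ forall x, In x l <-> A x.

Definition test_space {X : Type} (Sigma : set (set X)) : Prop :=
  forall x : X, exists T, Sigma T /\ T x.

Definition locally_finite {X : Type} (Sigma : set (set X)) : Prop :=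
  forall T, Sigma T -> exists l, enumerates l T.

Definition event {X : Type} (Sigma : set (set X)) (A : set X) : Prop :=
  exists T, Sigma T /\ subset A T.

Definition sumR {X : Type} (mu : X -> R) (l : list X) : R :=
  fold_right (fun x acc => mu x + acc) 0 l.

Definition probability_measure {X : Type} (Sigma : set (set X)) (mu : X -> R) : Prop :=
  (forall x, 0 <= mu x) /\
  (forall T l, Sigma T -> enumerates l T -> sumR mu l = 1).

Definition partial_order {D : Type} (le : D -> D -> Prop) : Prop :=
  (forall a, le a a) /\
  (forall a b, le a b -> le b a -> a = b) /\
  (forall a b c, le a b -> le b c -> le a c).

Definition strict {D : Type} (le : D -> D -> Prop) (a b : D) : Prop :=
  le a b /\ ~ le b a.

(* Pl is a plausibility measure; only its values on events matter *)
Definition plausibility_measure {X D : Type} (Sigma : set (set X))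
    (le : D -> D -> Prop) (Pl : set X -> D) : Prop :=
  (forall T R, Sigma T -> Sigma R -> Pl T = Pl R) /\
  (forall A B, event Sigma A -> event Sigma B -> subset A B -> le (Pl A) (Pl B)) /\
  (forall T, Sigma T -> strict le (Pl emptyset) (Pl T)).

Fixpoint mult {X : Type} (x : X) (A : nat -> set X) (n : nat) : nat :=
  match n with
  | O => O
  | S k => (mult x A k + if excluded_middle_informative (A k x) then 1 else 0)%nat
  end.

(* Archimedean: families indexed by 0..n-1 (the paper's 1..n) *)
Definition archimedean {X D : Type} (Sigma : set (set X))
    (le : D -> D -> Prop) (Pl : set X -> D) : Prop :=
  forall (n : nat) (A B : nat -> set X),
    (1 <= n)%nat ->
    (forall i, (i < n)%nat -> event Sigma (A i) /\ event Sigma (B i)) ->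
    (forall x, mult x A n = mult x B n) ->
    (forall i, (i < n - 1)%nat -> le (Pl (A i)) (Pl (B i))) ->
    le (Pl (B (n - 1)%nat)) (Pl (A (n - 1)%nat)).

(* Main.v *)
Require Import Defs.
From Stdlib Require Import Reals List.
From Stdlib Require Import Lra Lia ZArith FunctionalExtensionality Classical ClassicalEpsilon.
From mathcomp Require classical_sets.
Open Scope R_scope.

Definition cone_ok {X : Type} (M : (X->R)->Prop) (u : X->R) : Prop :=
 (forall g h, M g -> M h -> M (fun y => g y + h y)) /\ M (fun _ => 0) /\
 (forall k:nat, (1<=k)%nat -> ~ M (fun y => - (INR k * u y))) /\
 (forall g, M g \/ M (fun y => - g y)) /\ M u.

Lemma cone_mul {X} (M : (X->R)->Prop) u : cone_ok M u ->
  forall (n:nat) g, M g -> M (fun y => INR n * g y).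
Proof.
intros (Hadd & H0 & _ & _ & _) n g Hg. induction n.
- replace (fun y => INR 0 * g y) with (fun _ : X => 0); auto.
  apply functional_extensionality; intros; simpl; ring.
- replace (fun y => INR (S n) * g y) with (fun y => INR n * g y + g y); auto.
  apply functional_extensionality; intros; rewrite S_INR; ring.
Qed.

Lemma cone_negz {X} (M : (X->R)->Prop) u : cone_ok M u ->
  forall z : Z, (z < 0)%Z -> ~ M (fun y => IZR z * u y).
Proof.
intros (_ & _ & Hneg & _ & _) z Hz Hm.
apply (Hneg (Z.to_nat (- z))). lia.
replace (fun y => - (INR (Z.to_nat (- z)) * u y)) with (fun y => IZR z * u y); auto.
apply functional_extensionality; intros y. rewrite INR_IZR_INZ, Z2Nat.id by lia.
rewrite opp_IZR. ring.
Qed.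

Definition bdd {X} (M : (X->R)->Prop) (u : X -> R) (g : X -> R) :=
  exists N : nat, M (fun y => INR N * u y - g y) /\ M (fun y => INR N * u y + g y).

Definition Lset {X} (M : (X->R)->Prop) (u : X -> R) (g : X -> R) (r : R) :=
  exists (n:nat) (m:Z), (1 <= n)%nat /\ r = IZR m / INR n /\
     M (fun y => INR n * g y - IZR m * u y).

Lemma sep {X} (M : (X->R)->Prop) u : cone_ok M u -> forall g (n n':nat) (m m':Z),
  (1 <= n)%nat -> (1 <= n')%nat ->
  M (fun y => INR n * g y - IZR m * u y) -> M (fun y => IZR m' * u y - INR n' * g y) ->
  IZR m / INR n <= IZR m' / INR n'.
Proof.
intros Hc g n n' m m' Hn Hn' H1 H2.
pose proof (cone_mul M u Hc n' _ H1) as H1'.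
pose proof (cone_mul M u Hc n _ H2) as H2'.
assert (Hadd := proj1 Hc).
pose proof (Hadd _ _ H1' H2') as H3.
rewrite !INR_IZR_INZ in *.
assert (Hle : (Z.of_nat n' * m <= Z.of_nat n * m')%Z).
{ destruct (Z_le_gt_dec (Z.of_nat n' * m) (Z.of_nat n * m')) as [h|h]; auto.
  exfalso. apply (cone_negz M u Hc (Z.of_nat n * m' - Z.of_nat n' * m)); [lia|].
  replace (fun y => IZR (Z.of_nat n * m' - Z.of_nat n' * m) * u y) with
   (fun y : X => IZR (Z.of_nat n') * (IZR (Z.of_nat n) * g y - IZR m * u y) +
       IZR (Z.of_nat n) * (IZR m' * u y - IZR (Z.of_nat n') * g y)); auto.
  apply functional_extensionality; intros y. rewrite minus_IZR, !mult_IZR. ring. }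
assert (0 < IZR (Z.of_nat n)) by (apply IZR_lt; lia).
assert (0 < IZR (Z.of_nat n')) by (apply IZR_lt; lia).
apply IZR_le in Hle. rewrite !mult_IZR in Hle.
unfold Rdiv. apply (Rmult_le_reg_r (IZR (Z.of_nat n) * IZR (Z.of_nat n'))).
nra. field_simplify; lra.
Qed.

Definition lubR (E : R -> Prop) : R :=
  match excluded_middle_informative (bound E /\ (exists x, E x)) with
  | left H => proj1_sig (completeness E (proj1 H) (proj2 H))
  | right _ => 0 end.

Lemma lubR_spec E : bound E -> (exists x, E x) -> is_lub E (lubR E).
Proof.
intros h1 h2. unfold lubR. destruct excluded_middle_informative as [H|H].
- destruct (completeness E (proj1 H) (proj2 H)); simpl; auto.
- tauto.
Qed.

Definition fval {X} (M : (X->R)->Prop) u g := lubR (Lset M u g).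

Lemma L_upper {X} (M : (X->R)->Prop) u : cone_ok M u -> forall g (N:nat) r,
  M (fun y => INR N * u y - g y) -> Lset M u g r -> r <= INR N.
Proof.
intros Hc g N r HN (n & m & Hn & -> & Hm).
replace (INR N) with (IZR (Z.of_nat N) / INR 1) by (simpl; rewrite INR_IZR_INZ; field).
apply (sep M u Hc g n 1 m (Z.of_nat N)); auto.
replace (fun y => IZR (Z.of_nat N) * u y - INR 1 * g y) with (fun y => INR N * u y - g y); auto.
apply functional_extensionality; intros; rewrite INR_IZR_INZ; simpl; ring.
Qed.

Lemma L_lower {X} (M : (X->R)->Prop) u : forall g (N:nat),
  M (fun y => INR N * u y + g y) -> Lset M u g (- INR N).
Proof.
intros g N HN. exists 1%nat, (- Z.of_nat N)%Z. split; [lia|split].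
- rewrite opp_IZR, <- INR_IZR_INZ. simpl; field.
- replace (fun y => INR 1 * g y - IZR (- Z.of_nat N) * u y) with (fun y => INR N * u y + g y); auto.
  apply functional_extensionality; intros; rewrite opp_IZR, <- INR_IZR_INZ; simpl; ring.
Qed.

Lemma f_lub {X} (M : (X->R)->Prop) u : cone_ok M u -> forall g, bdd M u g ->
  is_lub (Lset M u g) (fval M u g).
Proof.
intros Hc g (N & H1 & H2). apply lubR_spec.
- exists (INR N). intros r Hr. eapply L_upper; eauto.
- exists (- INR N). apply L_lower; auto.
Qed.

Lemma f_ge {X} (M : (X->R)->Prop) u : cone_ok M u -> forall g r, bdd M u g ->
  Lset M u g r -> r <= fval M u g.
Proof. intros Hc g r Hb Hr. apply (f_lub M u Hc g Hb); auto. Qed.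

Lemma f_le {X} (M : (X->R)->Prop) u : cone_ok M u -> forall g c, bdd M u g ->
  (forall r, Lset M u g r -> r <= c) -> fval M u g <= c.
Proof. intros Hc g c Hb Hr. apply (f_lub M u Hc g Hb); auto. Qed.

Lemma bdd_add {X} (M : (X->R)->Prop) u : cone_ok M u -> forall g h,
  bdd M u g -> bdd M u h -> bdd M u (fun y => g y + h y).
Proof.
intros Hc g h (N1 & a1 & b1) (N2 & a2 & b2). exists (N1 + N2)%nat.
assert (Hadd := proj1 Hc). split.
- replace (fun y => INR (N1 + N2) * u y - (g y + h y)) with
   (fun y => (INR N1 * u y - g y) + (INR N2 * u y - h y)); auto.
  apply functional_extensionality; intros; rewrite plus_INR; ring.
- replace (fun y => INR (N1 + N2) * u y + (g y + h y)) with
   (fun y => (INR N1 * u y + g y) + (INR N2 * u y + h y)); auto.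
  apply functional_extensionality; intros; rewrite plus_INR; ring.
Qed.

Lemma bdd_opp {X} (M : (X->R)->Prop) u : forall g,
  bdd M u g -> bdd M u (fun y => - g y).
Proof.
intros g (N & a & b). exists N. split.
- replace (fun y => INR N * u y - - g y) with (fun y => INR N * u y + g y); auto.
  apply functional_extensionality; intros; ring.
- replace (fun y => INR N * u y + - g y) with (fun y => INR N * u y - g y); auto.
Qed.

Lemma f_superadd {X} (M : (X->R)->Prop) u : cone_ok M u -> forall g h,
  bdd M u g -> bdd M u h ->
  fval M u g + fval M u h <= fval M u (fun y => g y + h y).
Proof.
intros Hc g h Hg Hh.
assert (Hgh := bdd_add M u Hc g h Hg Hh).
assert (key : forall r s, Lset M u g r -> Lset M u h s -> r + s <= fval M u (fun y => g y + h y)).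
{ intros r s (n1 & m1 & hn1 & -> & M1) (n2 & m2 & hn2 & -> & M2).
  apply f_ge; auto.
  exists (n1 * n2)%nat, (m1 * Z.of_nat n2 + m2 * Z.of_nat n1)%Z. split; [lia|split].
  - rewrite mult_INR, plus_IZR, !mult_IZR, <- !INR_IZR_INZ. field.
    split; apply not_0_INR; lia.
  - pose proof (cone_mul M u Hc n2 _ M1) as A1.
    pose proof (cone_mul M u Hc n1 _ M2) as A2.
    pose proof (proj1 Hc _ _ A1 A2) as A3.
    replace (fun y => INR (n1 * n2) * (g y + h y) - IZR (m1 * Z.of_nat n2 + m2 * Z.of_nat n1) * u y)
      with (fun y => INR n2 * (INR n1 * g y - IZR m1 * u y) + INR n1 * (INR n2 * h y - IZR m2 * u y)); auto.
    apply functional_extensionality; intros.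
    rewrite mult_INR, plus_IZR, !mult_IZR, <- !INR_IZR_INZ. ring. }
assert (forall s, Lset M u h s -> fval M u g <= fval M u (fun y => g y + h y) - s).
{ intros s Hs. apply f_le; auto. intros r Hr. specialize (key r s Hr Hs). lra. }
assert (fval M u h <= fval M u (fun y => g y + h y) - fval M u g).
{ apply f_le; auto. intros s Hs. specialize (H s Hs). lra. }
lra.
Qed.

Lemma rat_between a b : a < b -> exists (n:nat) (m:Z), (1 <= n)%nat /\ a < IZR m / INR n < b.
Proof.
intros Hab.
destruct (archimed (1 / (b - a))) as [h1 _].
set (n := Z.to_nat (up (1 / (b - a)))).
assert (Hpos : 0 < 1 / (b - a)) by (apply Rdiv_lt_0_compat; lra).
assert (Hup : (0 < up (1 / (b - a)))%Z) by (apply lt_IZR; lra).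
assert (HnR : INR n = IZR (up (1 / (b - a)))) by (unfold n; rewrite INR_IZR_INZ, Z2Nat.id; [reflexivity|apply Z.lt_le_incl; exact Hup]).
assert (Hn : (1 <= n)%nat) by (unfold n; lia).
assert (Hn0 : 0 < INR n) by (apply lt_0_INR; lia).
destruct (archimed (INR n * a)) as [k1 k2].
exists n, (up (INR n * a)). split; auto. split.
- apply (Rmult_lt_reg_r (INR n)); auto. unfold Rdiv. rewrite Rmult_assoc, Rinv_l by lra. lra.
- apply (Rmult_lt_reg_r (INR n)); auto. unfold Rdiv. rewrite Rmult_assoc, Rinv_l by lra.
  assert (1 < INR n * (b - a)).
  { rewrite HnR. apply (Rmult_lt_compat_r (b - a)) in h1; [|lra].
    replace (1 / (b - a) * (b - a)) with 1 in h1 by (field; lra). lra. }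
  lra.
Qed.

Lemma f_opp_ge {X} (M : (X->R)->Prop) u : cone_ok M u -> forall g,
  bdd M u g -> 0 <= fval M u g + fval M u (fun y => - g y).
Proof.
intros Hc g Hg. destruct (Rle_lt_dec 0 (fval M u g + fval M u (fun y => - g y))) as [h|h]; auto.
exfalso. destruct (rat_between (fval M u g) (- fval M u (fun y => - g y))) as (n & m & Hn & q1 & q2); [lra|].
destruct (proj1 (proj2 (proj2 (proj2 Hc))) (fun y => INR n * g y - IZR m * u y)) as [Hm|Hm].
- assert (IZR m / INR n <= fval M u g); [|lra].
  apply f_ge; auto. exists n, m. auto.
- assert (IZR (- m) / INR n <= fval M u (fun y => - g y)).
  { apply f_ge; auto using bdd_opp. exists n, (- m)%Z. split; auto. split; auto.
    replace (fun y => INR n * - g y - IZR (- m) * u y) with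
      (fun y => - (INR n * g y - IZR m * u y)); auto.
    apply functional_extensionality; intros; rewrite opp_IZR; ring. }
  rewrite opp_IZR in H. unfold Rdiv in *. lra.
Qed.

Lemma bdd_zero {X} (M : (X->R)->Prop) u : cone_ok M u -> bdd M u (fun _ => 0).
Proof.
intros Hc. exists 0%nat. simpl.
replace (fun y : X => 0 * u y - 0) with (fun _ : X => 0) by
  (apply functional_extensionality; intros; ring).
replace (fun y : X => 0 * u y + 0) with (fun _ : X => 0) by
  (apply functional_extensionality; intros; ring).
split; apply Hc.
Qed.

Lemma f_add {X} (M : (X->R)->Prop) u : cone_ok M u -> forall g h,
  bdd M u g -> bdd M u h ->
  fval M u (fun y => g y + h y) = fval M u g + fval M u h.
Proof.
intros Hc g h Hg Hh. apply Rle_antisym; [|apply f_superadd; auto].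
assert (Hgh := bdd_add M u Hc g h Hg Hh).
pose proof (f_superadd M u Hc _ _ Hgh (bdd_opp M u h Hh)) as A.
cbv beta in A.
replace (fun y => g y + h y + - h y) with g in A by
  (apply functional_extensionality; intros; ring).
pose proof (f_opp_ge M u Hc h Hh). lra.
Qed.

Lemma f_pos {X} (M : (X->R)->Prop) u : cone_ok M u -> forall g,
  bdd M u g -> M g -> 0 <= fval M u g.
Proof.
intros Hc g Hb Hg. apply f_ge; auto. exists 1%nat, 0%Z. split; [lia|split].
- simpl; field.
- replace (fun y => INR 1 * g y - IZR 0 * u y) with g; auto.
  apply functional_extensionality; intros; simpl; ring.
Qed.

Lemma f_mono {X} (M : (X->R)->Prop) u : cone_ok M u -> forall g h,
  bdd M u g -> bdd M u h -> M (fun y => h y - g y) -> fval M u g <= fval M u h.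
Proof.
intros Hc g h Hg Hh Hm.
assert (Hb : bdd M u (fun y => h y - g y)) by (apply bdd_add; auto; apply bdd_opp; auto).
pose proof (f_add M u Hc g _ Hg Hb) as E.
cbv beta in E.
replace (fun y => g y + (h y - g y)) with h in E by
  (apply functional_extensionality; intros; ring).
pose proof (f_pos M u Hc _ Hb Hm). lra.
Qed.

Lemma f_u {X} (M : (X->R)->Prop) u : cone_ok M u -> bdd M u u /\ fval M u u = 1.
Proof.
intros Hc.
assert (Z0 : M (fun y => INR 1 * u y - u y)).
{ replace (fun y => INR 1 * u y - u y) with (fun _ : X => 0); [apply Hc|].
  apply functional_extensionality; intros; simpl; ring. }
assert (Hb : bdd M u u).
{ exists 1%nat. split; auto.
  replace (fun y => INR 1 * u y + u y) with (fun y => u y + u y); [apply Hc; apply Hc|].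
  apply functional_extensionality; intros; simpl; ring. }
split; auto. apply Rle_antisym.
- apply f_le; auto. intros r Hr. pose proof (L_upper M u Hc u 1 r Z0 Hr). simpl in H; lra.
- apply f_ge; auto. exists 1%nat, 1%Z. split; [lia|split].
  + simpl; field.
  + replace (fun y => INR 1 * u y - IZR 1 * u y) with (fun _ : X => 0); [apply Hc|].
    apply functional_extensionality; intros; simpl; ring.
Qed.

Definition indf {X} (A : set X) (y : X) : R := if excluded_middle_informative (A y) then 1 else 0.
Definition sumL {T} (F : T -> R) (l : list T) := fold_right (fun p acc => F p + acc) 0 l.
Definition vecL {X} (ps : list (set X * set X)) (y : X) : R :=
  sumL (fun p => indf (snd p) y - indf (fst p) y) ps.

Lemma sumL_app {T} (F : T -> R) l l' : sumL F (l ++ l') = sumL F l + sumL F l'.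
Proof. induction l; simpl; [ring|]. unfold sumL in *; simpl; rewrite IHl; ring. Qed.

Lemma sumL_sub {T} (F G : T -> R) l : sumL (fun p => F p - G p) l = sumL F l - sumL G l.
Proof. induction l; simpl; [ring|]. unfold sumL in *; simpl; rewrite IHl; ring. Qed.

Lemma sumL_repeat {T} (F : T -> R) a k : sumL F (repeat a k) = INR k * F a.
Proof. induction k; [simpl; ring|]. rewrite S_INR. unfold sumL in *; simpl. rewrite IHk. ring. Qed.

Lemma mult_ext {X} (x : X) A A' n : (forall i, (i < n)%nat -> A i = A' i) -> mult x A n = mult x A' n.
Proof.
induction n; intros H; simpl; auto. rewrite IHn by (intros; apply H; lia).
rewrite (H n) by lia. reflexivity.
Qed.

Lemma mult_list {X} (x : X) (F : set X * set X -> set X) d L :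
  INR (mult x (fun i => F (nth i L d)) (length L)) = sumL (fun p => indf (F p) x) L.
Proof.
induction L as [|p L IH] using rev_ind; simpl; auto.
rewrite length_app. simpl. rewrite Nat.add_1_r. simpl.
rewrite (mult_ext x _ (fun i => F (nth i L d))).
2:{ intros i hi. rewrite app_nth1 by auto. reflexivity. }
rewrite plus_INR, IH, sumL_app. rewrite nth_middle. unfold sumL, indf; simpl.
destruct excluded_middle_informative; simpl; ring.
Qed.

Definition okp {X D} (Sigma : set (set X)) (le : D -> D -> Prop) (Pl : set X -> D)
  (p : set X * set X) := event Sigma (fst p) /\ event Sigma (snd p) /\ le (Pl (fst p)) (Pl (snd p)).

Lemma indf_empty {X} (y : X) : indf emptyset y = 0.
Proof. unfold indf; destruct excluded_middle_informative; [contradiction|auto]. Qed.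

Lemma arch_contra {X D} (Sigma : set (set X)) (le : D -> D -> Prop) (Pl : set X -> D) T0 :
  Sigma T0 -> plausibility_measure Sigma le Pl -> archimedean Sigma le Pl ->
  forall ps (k : nat), Forall (okp Sigma le Pl) ps -> (1 <= k)%nat ->
  ~ (forall y, vecL ps y = - (INR k * vecL ((emptyset, T0) :: nil) y)).
Proof.
intros HT0 (_ & Hmon & Hstr) Harch ps k Hok Hk Heq.
assert (Hev0 : event Sigma emptyset) by (exists T0; split; auto; intros x []).
assert (HevT : event Sigma T0) by (exists T0; split; auto; intros x h; exact h).
assert (Hok0 : okp Sigma le Pl (emptyset, T0)).
{ split; [|split]; simpl; auto. apply Hmon; auto. intros x []. }
set (p0 := (@emptyset X, T0)).
set (L := (ps ++ repeat p0 (k - 1)) ++ p0 :: nil).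
assert (HokL : Forall (okp Sigma le Pl) L).
{ unfold L. apply Forall_app; split; [apply Forall_app; split|].
  - auto.
  - apply Forall_forall. intros p Hp. apply repeat_spec in Hp. subst; auto.
  - constructor; auto. }
set (n := length L).
assert (Hn : n = S (length (ps ++ repeat p0 (k - 1)))) by (unfold n, L; rewrite length_app; simpl; lia).
assert (Hlast : nth (n - 1) L p0 = p0) by (rewrite Hn; simpl; rewrite Nat.sub_0_r; apply nth_middle).
pose proof (Harch n (fun i => fst (nth i L p0)) (fun i => snd (nth i L p0))) as H.
assert (Hall : forall i, (i < n)%nat -> okp Sigma le Pl (nth i L p0)).
{ intros i hi. apply (proj1 (Forall_nth _ _) HokL); auto. }
simpl in H. rewrite Hlast in H. simpl in H.
apply (proj2 (Hstr T0 HT0)). apply H.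
- lia.
- intros i hi. destruct (Hall i hi) as (a & b & _); auto.
- intros x. apply INR_eq. unfold n. rewrite !mult_list.
  assert (vecL L x = 0).
  { unfold L, vecL. rewrite !sumL_app, sumL_repeat. fold (vecL ps x). rewrite Heq.
    unfold vecL, sumL, p0; simpl. replace (INR k) with (INR (k - 1) + 1).
    ring. rewrite <- S_INR. f_equal. lia. }
  unfold vecL in H0. rewrite sumL_sub in H0. lra.
- intros i hi. destruct (Hall i ltac:(lia)) as (_ & _ & c); auto.
Qed.

Lemma zorn_sets (T: Type) (P : (T->Prop) -> Prop) :
 (forall F : (T->Prop)->Prop, (forall S, F S -> P S) ->
   (forall S1 S2, F S1 -> F S2 -> (forall t, S1 t -> S2 t) \/ (forall t, S2 t -> S1 t)) ->
   P (fun x => exists2 S, F S & S x)) ->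
 exists A, P A /\ forall B, (forall t, A t -> B t) -> ~ (forall t, B t -> A t) -> ~ P B.
Proof.
intros H. destruct (@classical_sets.Zorn_bigcup T P) as [A [PA HA]].
- intros F FP Ftot. apply H; [exact FP|]. intros S1 S2 h1 h2. exact (Ftot S1 S2 h1 h2).
- exists A. split; [exact PA|]. intros B h1 h2. apply HA. split; assumption.
Qed.

Definition goodc {X} (u : X -> R) (P : (X->R)->Prop) :=
  (forall g h, P g -> P h -> P (fun y => g y + h y)) /\
  (forall k:nat, (1<=k)%nat -> ~ P (fun y => - (INR k * u y))).

Lemma max_cone {X} (P0 : (X->R)->Prop) (u : X -> R) : goodc u P0 ->
  exists M, (forall z, P0 z -> M z) /\ goodc u M /\
   (forall B, goodc u B -> (forall z, M z -> B z) -> forall z, B z -> M z).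
Proof.
intros [P0add P0neg].
destruct (zorn_sets (X -> R) (fun S => goodc u (fun z => S z \/ P0 z))) as [A [HA Hmax]].
- intros F HF Htot. split.
  + intros g h [[S1 F1 g1]|g0] [[S2 F2 h2]|h0].
    * destruct (Htot S1 S2 F1 F2) as [i|i].
      -- destruct (proj1 (HF S2 F2) g h (or_introl (i g g1)) (or_introl h2)) as [q|q]; auto.
         left; exists S2; auto.
      -- destruct (proj1 (HF S1 F1) g h (or_introl g1) (or_introl (i h h2))) as [q|q]; auto.
         left; exists S1; auto.
    * destruct (proj1 (HF S1 F1) g h (or_introl g1) (or_intror h0)) as [q|q]; auto.
      left; exists S1; auto.
    * destruct (proj1 (HF S2 F2) g h (or_intror g0) (or_introl h2)) as [q|q]; auto.
      left; exists S2; auto.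
    * right; auto.
  + intros k hk [[S F1 s1]|s0].
    * apply (proj2 (HF S F1) k hk); auto.
    * apply (P0neg k hk s0).
- exists (fun z => A z \/ P0 z). split; [auto|split; [exact HA|]].
  intros B [Badd Bneg] HMB z Bz. apply NNPP; intros Hz.
  apply (Hmax B).
  + intros t h; apply HMB; auto.
  + intros h. apply Hz. left; auto.
  + split.
    * intros g h [g1|g1] [h1|h1]; left; apply Badd; auto.
    * intros k hk [b|b]; [apply (Bneg k hk b)|apply (Bneg k hk (HMB _ (or_intror b)))].
Qed.

Lemma max_total {X} (M : (X->R)->Prop) (u : X -> R) : goodc u M -> M (fun _ => 0) ->
   (forall B, goodc u B -> (forall z, M z -> B z) -> forall z, B z -> M z) ->
   forall g, M g \/ M (fun y => - g y).
Proof.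
intros [Madd Mneg] M0 Hmax.
assert (Mmul : forall (n:nat) g, M g -> M (fun y => INR n * g y)).
{ intros n g Hg. induction n.
  - replace (fun y => INR 0 * g y) with (fun _ : X => 0); auto.
    apply functional_extensionality; intros; simpl; ring.
  - replace (fun y => INR (S n) * g y) with (fun y => INR n * g y + g y); auto.
    apply functional_extensionality; intros; rewrite S_INR; ring. }
assert (key : forall g, ~ M g -> exists p (k' k : nat), M p /\ (1 <= k')%nat /\ (1 <= k)%nat /\
           forall y, - (INR k * u y) = p y + INR k' * g y).
{ intros g Hg. set (B := fun z => exists p (k:nat), M p /\ z = (fun y => p y + INR k * g y)).
  apply NNPP; intros Hno. apply Hg. apply (Hmax B).
  - split.
    + intros a b (p1 & k1 & m1 & ->) (p2 & k2 & m2 & ->).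
      exists (fun y => p1 y + p2 y), (k1 + k2)%nat. split; auto.
      apply functional_extensionality; intros; rewrite plus_INR; ring.
    + intros k hk (p & k' & mp & E).
      destruct k' as [|k'].
      * apply (Mneg k hk). replace (fun y => - (INR k * u y)) with p; auto.
        rewrite E. apply functional_extensionality; intros; simpl; ring.
      * apply Hno. exists p, (S k'), k. split; auto. split; [lia|split; auto].
        intros y. apply (f_equal (fun f => f y)) in E. exact E.
  - intros z hz. exists z, 0%nat. split; auto.
    apply functional_extensionality; intros; simpl; ring.
  - exists (fun _ => 0), 1%nat. split; auto.
    apply functional_extensionality; intros; simpl; ring. }
intros g. apply NNPP; intros H.
destruct (key g (fun h => H (or_introl h))) as (p & k1 & k & mp & h1 & h2 & E1).
destruct (key (fun y => - g y) (fun h => H (or_intror h))) as (q & k1' & k' & mq & h1' & h2' & E2).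
apply (Mneg (k1' * k + k1 * k')%nat); [nia|].
replace (fun y => - (INR (k1' * k + k1 * k') * u y)) with
  (fun y => INR k1' * p y + INR k1 * q y); [apply Madd; apply Mmul; auto|].
apply functional_extensionality; intros y. rewrite plus_INR, !mult_INR.
specialize (E1 y); specialize (E2 y). nra.
Qed.

Lemma indf_enum {X} (l : list X) (A : set X) : enumerates l A ->
  forall y, indf A y = sumL (fun x => indf (fun y' => y' = x) y) l.
Proof.
intros [Hnd Hin] y.
assert (indf A y = indf (fun y' => In y' l) y).
{ unfold indf. destruct excluded_middle_informative as [a|a];
  destruct excluded_middle_informative as [b|b]; auto; exfalso.
  - apply b, Hin, a.
  - apply a, Hin, b. }
rewrite H. clear H Hin. induction l as [|a l IH]; simpl.
- unfold indf; destruct excluded_middle_informative; [contradiction|auto].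
- inversion Hnd; subst. unfold sumL in *; simpl. rewrite <- IH by auto.
  unfold indf. destruct (excluded_middle_informative (y = a)) as [e|e].
  + subst. destruct (excluded_middle_informative (In a l)); [contradiction|].
    destruct excluded_middle_informative as [_|nn]; [ring|]. exfalso; apply nn; left; auto.
  + destruct (excluded_middle_informative (In y l)) as [i|i];
    destruct excluded_middle_informative as [j|j]; try ring; exfalso.
    * apply j; right; auto.
    * destruct j as [j|j]; auto.
Qed.

Theorem theorem2 (X D : Type) (Sigma : set (set X))
  (le : D -> D -> Prop) (Pl : set X -> D) :
  test_space Sigma ->
  locally_finite Sigma ->
  partial_order le ->
  plausibility_measure Sigma le Pl ->
  archimedean Sigma le Pl ->
  exists mu : X -> R,
    probability_measure Sigma mu /\
    (forall (A B : set X) (lA lB : list X),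
        event Sigma A -> event Sigma B ->
        enumerates lA A -> enumerates lB B ->
        le (Pl A) (Pl B) -> sumR mu lA <= sumR mu lB).
Proof.
intros Hts Hlf Hpo Hpl Harch.
destruct (classic (exists T0, Sigma T0)) as [[T0 HT0]|Hno].
2:{ exists (fun _ => 0). split; [split|].
    - intros; lra.
    - intros T l HT; exfalso; eauto.
    - intros A B lA lB [T [HT _]]; exfalso; eauto. }
destruct Hpl as [Heqt [Hmon Hstr]] eqn:EHpl.
destruct Hpo as [Hrefl [Hanti Htrans]].
set (u := vecL ((@emptyset X, T0) :: nil)).
set (P0 := fun z : X -> R => exists ps, Forall (okp Sigma le Pl) ps /\ z = vecL ps).
assert (HP0 : goodc u P0).
{ split.
  - intros g h (p1 & o1 & ->) (p2 & o2 & ->). exists (p1 ++ p2). split.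
    + apply Forall_app; auto.
    + apply functional_extensionality; intros y. unfold vecL. rewrite sumL_app; auto.
  - intros k hk (ps & ops & E). apply (arch_contra Sigma le Pl T0 HT0 Hpl Harch ps k ops hk).
    intros y. apply (f_equal (fun f => f y)) in E. simpl in E. rewrite <- E. reflexivity. }
destruct (max_cone P0 u HP0) as (M & HP0M & HgM & Hmax).
assert (HP0e : forall ps, Forall (okp Sigma le Pl) ps -> M (vecL ps)).
{ intros ps h. apply HP0M. exists ps; auto. }
assert (M0 : M (fun _ => 0)).
{ apply (HP0e nil); auto. }
assert (Hc : cone_ok M u).
{ destruct HgM as [Madd Mneg]. split; [auto|split; [auto|split; [auto|split]]].
  - apply (max_total M u); auto. split; auto.
  - apply HP0e. constructor; [|constructor]. split; [|split]; simpl.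
    + exists T0; split; auto; intros x [].
    + exists T0; split; auto; intros x h; exact h.
    + apply Hmon; [exists T0; split; auto; intros x []|exists T0; split; auto; intros x h; exact h|intros x []]. }
assert (evsame : forall A B, event Sigma A -> event Sigma B -> (forall x, A x -> B x) -> okp Sigma le Pl (A, B)).
{ intros A B a b s. split; [|split]; auto. }
assert (evtest : forall T, Sigma T -> event Sigma T).
{ intros T h; exists T; split; auto; intros x hx; exact hx. }
assert (Hev0 : event Sigma emptyset) by (exists T0; split; auto; intros x []).
assert (okTT : forall T T', Sigma T -> Sigma T' -> okp Sigma le Pl (T, T')).
{ intros T T' h h'. split; [|split]; simpl; auto. rewrite (Heqt T T' h h'). apply Hrefl. }
assert (uE : forall y, u y = indf T0 y).
{ intros y. unfold u, vecL, sumL; simpl. rewrite indf_empty. ring. }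
assert (Mind : forall A, event Sigma A -> M (indf A)).
{ intros A hA. replace (indf A) with (vecL ((@emptyset X, A) :: nil)).
  - apply HP0e. constructor; auto. apply evsame; auto. intros x [].
  - apply functional_extensionality; intros y. unfold vecL, sumL; simpl. rewrite indf_empty. ring. }
assert (Bind : forall A, event Sigma A -> bdd M u (indf A)).
{ intros A [T' [HT' sA]]. exists 1%nat. split.
  - replace (fun y => INR 1 * u y - indf A y) with (vecL ((A, T') :: (T', T0) :: nil)).
    + apply HP0e. constructor; [apply evsame; auto; exists T'; split; auto|].
      constructor; auto.
    + apply functional_extensionality; intros y. rewrite uE. unfold vecL, sumL; simpl. ring.
  - replace (fun y => INR 1 * u y + indf A y) with (fun y => u y + indf A y).
    + apply Hc; [apply Hc|apply Mind; exists T'; auto].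
    + apply functional_extensionality; intros y; simpl; ring. }
set (e := fun x : X => indf (fun y' => y' = x)).
assert (Hev1 : forall x, event Sigma (fun y' => y' = x)).
{ intros x. destruct (Hts x) as [T [HT Tx]]. exists T; split; auto. intros y ->; auto. }
set (mu := fun x => fval M u (e x)).
assert (sumE : forall l, bdd M u (fun y => sumL (fun x => e x y) l) /\
             fval M u (fun y => sumL (fun x => e x y) l) = sumR mu l).
{ induction l as [|a l [IH1 IH2]].
  - simpl. split; [apply bdd_zero; auto|].
    unfold sumL; simpl. pose proof (f_add M u Hc _ _ (bdd_zero M u Hc) (bdd_zero M u Hc)) as Z.
    cbv beta in Z. replace (fun _ : X => 0 + 0) with (fun _ : X => 0) in Z by
      (apply functional_extensionality; intros; ring). lra.
  - assert (ba : bdd M u (e a)) by (apply Bind; auto).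
    replace (fun y => sumL (fun x => e x y) (a :: l)) with
      (fun y => e a y + sumL (fun x => e x y) l) by reflexivity.
    split; [apply bdd_add; auto|].
    rewrite (f_add M u Hc _ _ ba IH1). simpl. rewrite IH2. reflexivity. }
assert (enumE : forall A l, event Sigma A -> enumerates l A -> fval M u (indf A) = sumR mu l).
{ intros A l hA hl. replace (indf A) with (fun y => sumL (fun x => e x y) l).
  - apply sumE.
  - apply functional_extensionality; intros y. rewrite (indf_enum l A hl). reflexivity. }
destruct (f_u M u Hc) as [bu fu].
exists mu. split; [split|].
- intros x. apply f_pos; [auto|apply Bind|apply Mind]; auto.
- intros T l HT hl. rewrite <- (enumE T l (evtest T HT) hl).
  apply Rle_antisym.
  + rewrite <- fu. apply f_mono; auto.
    replace (fun y => u y - indf T y) with (vecL ((T, T0) :: nil)).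
    * apply HP0e. constructor; auto.
    * apply functional_extensionality; intros y. rewrite uE. unfold vecL, sumL; simpl. ring.
  + rewrite <- fu. apply f_mono; auto.
    replace (fun y => indf T y - u y) with (vecL ((T0, T) :: nil)).
    * apply HP0e. constructor; auto.
    * apply functional_extensionality; intros y. rewrite uE. unfold vecL, sumL; simpl. ring.
- intros A B lA lB hA hB eA eB hle.
  rewrite <- (enumE A lA hA eA), <- (enumE B lB hB eB).
  apply f_mono; auto.
  replace (fun y => indf B y - indf A y) with (vecL ((A, B) :: nil)).
  + apply HP0e. constructor; auto. split; [|split]; auto.
  + apply functional_extensionality; intros y. unfold vecL, sumL; simpl. ring.
Qed.
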